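(* Let $n\ge2$ and let $\mathsf r$ be a cyclic factorization of $\lambda_n$. Then there exists $\mathsf u\in\mathcal S_n$ such that $\mathsf r=\mathsf r^{\mathsf u}$.
   Context: $\widetilde S_n$ is the group, under composition $(vw)(k)=v(w(k))$, of bijections $w:\mathbb Z\to\mathbb Z$ with $w(i+n)=w(i)+n$ and $\sum_{i=1}^n w(i)=\binom{n+1}2$. For $i\not\equiv j\pmod n$, $(\!(i,j)\!)$ swaps $i+kn$ and $j+kn$ for all $k$; $(\!(i,j)\!)=(\!(j,i)\!)=(\!(i+kn,j+kn)\!)$; $s_i=(\!(i,i+1)\!)$, $i\in\{0,\dots,n-1\}$. ''$i\bmod n$'' is the representative in $\{1,\dots,n\}$. $\lambda_n(k)=k+n$ for $k\not\equiv0\pmod n$, $\lambda_n(k)=k-n(n-1)$ for $k\equiv0\pmod n$; its reflection length is $2n-2$; $\textsc{fact}(\lambda_n)$ is the set of sequences of $2n-2$ reflections with product $\lambda_n$. Such $[r_1,\dots,r_{2n-2}]$ is tree-like if one can write $r_i=(\!(a_{i-1},b_i)\!)$ with integers $a_{i-1}<b_i$ and $a_i\equiv b_i\pmod n$ ($1\le i\le 2n-3$). For $k\in[n]$, $N_{\mathsf r}(k)$ is the list, in increasing order of $i$, of $b_i\bmod n$ over all $i$ with $a_{i-1}\equiv k\pmod n$. A tree-like $\mathsf r$ is cyclic if (i) $N_{\mathsf r}(n)$ is strictly increasing and (ii) for each $1\le k<n$, writing $N_{\mathsf r}(k)=[c_1,\dots,c_\ell]$, there is $1\le j\le \ell$ with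 $c_j<\dots<c_{\ell-1}<k<c_1<\dots<c_{j-1}$. $\bm\lambda_n$ is the word $[s_0,\dots,s_{n-1}]$ repeated $n-1$ times with $j$-th letter $\sigma_j=s_{(j-1)\bmod n}$ (index in $\{0,\dots,n-1\}$). A subword is $\mathsf u=[u_1,\dots,u_{n(n-1)}]$ with $u_j\in\{\sigma_j,e\}$; $j$ is a skip if $u_j=e$. $u_{(j)}=u_1\cdots u_j$, $u_{(0)}=e$. $\mathcal S_n$ is the set of subwords with exactly $2n-2$ skips and product $e$. $\textsc{inv}(\mathsf u)=[t_1,\dots,t_{n(n-1)}]$, $t_j=u_{(j-1)}\sigma_ju_{(j-1)}^{-1}$; $\mathsf r^{\mathsf u}$ is the subsequence of the $t_j$ at skips, in increasing order. *)

(* Defs.v *)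
(* affine permutations as functions Z -> Z. *)
From Stdlib Require Import ZArith List Lia Sorting.Sorted.
Import ListNotations.
Open Scope Z_scope.

Definition NZ (n : nat) : Z := Z.of_nat n.

Definition congrb (n : nat) (a b : Z) : bool := Z.eqb ((a - b) mod NZ n) 0.

(* "k mod n": the representative in {1,...,n} *)
Definition modrep (n : nat) (k : Z) : Z := ((k - 1) mod NZ n) + 1.

Definition feq (f g : Z -> Z) : Prop := forall k, f k = g k.

(* ((i,j)) : swaps i+kn and j+kn for all k (meaningful when i, j not congruent) *)
Definition refl (n : nat) (i j : Z) : Z -> Z := fun k =>
  if congrb n k i then k - i + j
  else if congrb n k j then k - j + i
  else k.

Definition is_reflection (n : nat) (f : Z -> Z) : Prop :=
  exists i j : Z, congrb n i j = false /\ feq f (refl n i j).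

(* product under composition: [r1;...;rm] |-> r1 o r2 o ... o rm *)
Definition prod (l : list (Z -> Z)) : Z -> Z :=
  fold_right (fun f g => fun k => f (g k)) (fun k => k) l.

Definition lambda (n : nat) (k : Z) : Z :=
  if Z.eqb (k mod NZ n) 0 then k - NZ n * (NZ n - 1) else k + NZ n.

Definition is_fact (n : nat) (r : list (Z -> Z)) : Prop :=
  length r = (2 * n - 2)%nat /\ Forall (is_reflection n) r /\ feq (prod r) (lambda n).

(* a, b witness tree-likeness of r: r_i = ((a_{i-1}, b_i)), a_{i-1} < b_i,
   a_{i-1} not congruent to b_i (so the reflection notation makes sense),
   and a_i == b_i mod n for 1 <= i <= 2n-3.  Indices: a : 0..2n-3, b : 1..2n-2. *)
Definition tree_witness (n : nat) (r : list (Z -> Z)) (a b : nat -> Z) : Prop :=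
  (forall i : nat, (1 <= i <= 2 * n - 2)%nat ->
     congrb n (a (i - 1)%nat) (b i) = false /\ a (i - 1)%nat < b i /\
     feq (nth (i - 1) r (fun k => k)) (refl n (a (i - 1)%nat) (b i))) /\
  (forall i : nat, (1 <= i <= 2 * n - 3)%nat -> congrb n (a i) (b i) = true).

Definition tree_like (n : nat) (r : list (Z -> Z)) : Prop :=
  exists a b, tree_witness n r a b.

Definition Nlist (n : nat) (a b : nat -> Z) (k : Z) : list Z :=
  map (fun i => modrep n (b i))
      (filter (fun i => congrb n (a (i - 1)%nat) k) (seq 1 (2 * n - 2))).

(* condition (ii) for a given k and list [c_1,...,c_l]:
   exists 1 <= j <= l with c_j < ... < c_{l-1} < k < c_1 < ... < c_{j-1} *)
Definition cyc_cond (k : Z) (s : list Z) : Prop :=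
  exists j : nat, (1 <= j <= length s)%nat /\
    Sorted Z.lt (firstn (length s - j) (skipn (j - 1) s) ++ [k] ++ firstn (j - 1) s).

Definition cyclic (n : nat) (r : list (Z -> Z)) : Prop :=
  exists a b, tree_witness n r a b /\
    Sorted Z.lt (Nlist n a b (NZ n)) /\
    (forall k : Z, 1 <= k < NZ n -> cyc_cond k (Nlist n a b k)).

Definition simple (n : nat) (i : nat) : Z -> Z := refl n (Z.of_nat i) (Z.of_nat i + 1).

Definition sigma (n : nat) (j : nat) : Z -> Z := simple n ((j - 1) mod n)%nat.

(* a subword u of bold-lambda_n is encoded by its skip flags
   (true at position j, 1-based, iff u_j = e) *)
Definition letter (n : nat) (u : list bool) (j : nat) : Z -> Z :=
  if nth (j - 1) u false then (fun k => k) else sigma n j.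

Definition letters (n : nat) (u : list bool) : list (Z -> Z) :=
  map (letter n u) (seq 1 (n * (n - 1))).

Definition uprefix (n : nat) (u : list bool) (j : nat) : Z -> Z :=
  prod (firstn j (letters n u)).

(* u_(j)^{-1} = u_j^{-1} ... u_1^{-1} = u_j ... u_1  (each letter is e or an s_i,
   which are involutions) *)
Definition uprefix_inv (n : nat) (u : list bool) (j : nat) : Z -> Z :=
  prod (rev (firstn j (letters n u))).

Definition tinv (n : nat) (u : list bool) (j : nat) : Z -> Z :=
  fun k => uprefix n u (j - 1) (sigma n j (uprefix_inv n u (j - 1) k)).

Definition in_Sn (n : nat) (u : list bool) : Prop :=
  length u = (n * (n - 1))%nat /\
  length (filter (fun x => x) u) = (2 * n - 2)%nat /\
  feq (prod (letters n u)) (fun k => k).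

Definition r_of (n : nat) (u : list bool) : list (Z -> Z) :=
  map (tinv n u) (filter (fun j => nth (j - 1) u false) (seq 1 (n * (n - 1)))).

(* Main.v *)
Require Import Defs.
From Stdlib Require Import ZArith List Lia Sorting.Sorted Arith.
Import ListNotations.
Open Scope Z_scope.

Section Gen.
Variable n : nat.
Hypothesis Hn : (2 <= n)%nat.
Let nz := NZ n.
Lemma nz_ge2 : 2 <= nz. Proof. unfold nz, NZ. lia. Qed.
Lemma nz_neq0 : nz <> 0. Proof. pose proof nz_ge2; lia. Qed.

Definition cl (x : Z) := x mod nz.

Lemma cl_ex x y : cl x = cl y <-> exists t, x = y + t * nz.
Proof.
  unfold cl; pose proof nz_ge2 as Hz. split.
  - intros H. pose proof (Z.div_mod x nz nz_neq0). pose proof (Z.div_mod y nz nz_neq0).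
    exists (x / nz - y / nz). rewrite H in *. lia.
  - intros [t ->]. rewrite Z.mod_add; auto; lia.
Qed.

Lemma congrb_cl x y : congrb n x y = (cl x =? cl y).
Proof.
  unfold congrb. fold nz. pose proof nz_ge2 as Hz.
  destruct (Z.eqb_spec ((x - y) mod nz) 0) as [H|H];
  destruct (Z.eqb_spec (cl x) (cl y)) as [H'|H']; auto.
  - exfalso. apply H'. apply cl_ex. pose proof (Z.div_mod (x - y) nz nz_neq0).
    exists ((x - y) / nz). rewrite H in *. lia.
  - exfalso. apply H. apply cl_ex in H' as [t ->].
    replace (y + t * nz - y) with (0 + t * nz) by lia. rewrite Z.mod_add; auto; lia.
Qed.

Lemma cl_shift x t : cl (x + t * nz) = cl x.
Proof. unfold cl. rewrite Z.mod_add; auto; apply nz_neq0. Qed.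

Lemma cl_add x y : cl (x + y) = cl (cl x + y).
Proof. unfold cl. rewrite Z.add_mod_idemp_l; auto; apply nz_neq0. Qed.

Lemma cl_range x : 0 <= cl x < nz.
Proof. unfold cl. apply Z.mod_pos_bound. pose proof nz_ge2; lia. Qed.

Lemma cl_small x : 0 <= x < nz -> cl x = x.
Proof. unfold cl. intros. apply Z.mod_small; auto. Qed.


Lemma cl_eq_dec x y : {cl x = cl y} + {cl x <> cl y}.
Proof. apply Z.eq_dec. Qed.

Lemma refl_spec i j k : cl i <> cl j ->
  (cl k = cl i /\ refl n i j k = k - i + j) \/
  (cl k = cl j /\ refl n i j k = k - j + i) \/
  (cl k <> cl i /\ cl k <> cl j /\ refl n i j k = k).
Proof.
  intros Hij. unfold refl. rewrite !congrb_cl.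
  destruct (Z.eqb_spec (cl k) (cl i)); [left; auto|].
  destruct (Z.eqb_spec (cl k) (cl j)); [right; left; auto|]. right; right; auto.
Qed.

Definition per (f : Z -> Z) := forall k t, f (k + t * nz) = f k + t * nz.

Lemma refl_per i j : per (refl n i j).
Proof.
  intros k t. unfold refl. rewrite !congrb_cl.
  replace (k + t * nz) with (k + t * nz) by lia. rewrite !cl_shift.
  destruct (cl k =? cl i); [lia|]. destruct (cl k =? cl j); lia.
Qed.

Lemma cl_eq_shift x y t : x = y + t * nz -> cl x = cl y.
Proof. intros ->. apply cl_shift. Qed.

Lemma refl_inv i j k : cl i <> cl j -> refl n i j (refl n i j k) = k.
Proof.
  intros Hij.
  destruct (refl_spec i j k Hij) as [[H1 H2]|[[H1 H2]|[H1 [H3 H2]]]]; rewrite H2.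
  - apply cl_ex in H1 as [t Ht].
    destruct (refl_spec i j (k - i + j) Hij) as [[G1 G2]|[[G1 G2]|[G1 [G2 G3]]]].
    + exfalso. rewrite (cl_eq_shift _ j t) in G1 by lia. auto.
    + lia.
    + exfalso. apply G2. apply (cl_eq_shift _ j t). lia.
  - apply cl_ex in H1 as [t Ht].
    destruct (refl_spec i j (k - j + i) Hij) as [[G1 G2]|[[G1 G2]|[G1 [G2 G3]]]].
    + lia.
    + exfalso. rewrite (cl_eq_shift _ i t) in G1 by lia. auto.
    + exfalso. apply G1. apply (cl_eq_shift _ i t). lia.
  - rewrite H2. reflexivity.
Qed.

Lemma refl_congr i j i' j' k : cl i' = cl i -> j' - i' = j - i -> refl n i' j' k = refl n i j k.
Proof.
  intros H1 H2. apply cl_ex in H1 as [t Ht].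
  unfold refl. rewrite !congrb_cl.
  rewrite (cl_eq_shift i' i t) by lia. rewrite (cl_eq_shift j' j t) by lia.
  destruct (cl k =? cl i); [lia|]. destruct (cl k =? cl j); lia.
Qed.

Lemma prod_cons f l k : prod (f :: l) k = f (prod l k).
Proof. reflexivity. Qed.

Lemma prod_nil k : prod [] k = k.
Proof. reflexivity. Qed.

Lemma prod_app l1 l2 k : prod (l1 ++ l2) k = prod l1 (prod l2 k).
Proof. induction l1 as [|f l1 IH]; simpl; auto. unfold prod in *; simpl. rewrite IH. auto. Qed.

Lemma prod_per l : Forall per l -> per (prod l).
Proof.
  induction 1 as [|f l Hf Hl IH]; intros k t; simpl.
  - reflexivity.
  - change (f (prod l (k + t * nz)) = f (prod l k) + t * nz). rewrite IH, Hf. auto.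
Qed.

Definition invol (f : Z -> Z) := forall k, f (f k) = k.

Lemma prod_rev_inv l : Forall invol l ->
  forall k, prod (rev l) (prod l k) = k /\ prod l (prod (rev l) k) = k.
Proof.
  induction 1 as [|f l Hf Hl IH]; intros k; simpl.
  - split; reflexivity.
  - rewrite !prod_app. change (prod [f] ?x) with (f x).
    change (prod (f :: l) ?x) with (f (prod l x)). split.
    + rewrite Hf. apply IH.
    + rewrite (proj2 (IH (f k))). apply Hf.
Qed.

Lemma firstn_S_nth {A} (l : list A) c d : (c < length l)%nat ->
  firstn (S c) l = firstn c l ++ [nth c l d].
Proof.
  revert c; induction l as [|x l IH]; intros c Hc; simpl in *; [lia|].
  destruct c; simpl; auto. f_equal. apply IH. lia.
Qed.

Lemma per_inv f g : per f -> (forall z, f (g z) = z) -> (forall z, g (f z) = z) -> per g.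
Proof.
  intros Hf H1 H2 k t. rewrite <- (H1 k) at 1. rewrite <- Hf. apply H2.
Qed.

Lemma conj_refl f g x y : per f -> (forall z, f (g z) = z) -> (forall z, g (f z) = z) ->
  cl x <> cl y -> forall k, f (refl n x y (g k)) = refl n (f x) (f y) k.
Proof.
  intros Hf H1 H2 Hxy k. assert (Hg : per g) by (eapply per_inv; eauto).
  assert (Hfxy : cl (f x) <> cl (f y)).
  { intros E. apply cl_ex in E as [t Ht]. apply Hxy. apply (cl_eq_shift _ _ t).
    rewrite <- Hf in Ht. apply (f_equal g) in Ht. rewrite !H2 in Ht. auto. }
  destruct (refl_spec x y (g k) Hxy) as [[A1 A2]|[[A1 A2]|[A1 [A3 A2]]]]; rewrite A2.
  - apply cl_ex in A1 as [t Ht].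
    assert (Hk : k = f x + t * nz) by (rewrite <- Hf, <- Ht; auto).
    replace (g k - x + y) with (y + t * nz) by lia. rewrite Hf.
    destruct (refl_spec (f x) (f y) k Hfxy) as [[B1 B2]|[[B1 B2]|[B1 [B3 B2]]]]; rewrite B2.
    + lia.
    + exfalso. apply Hfxy. rewrite <- B1. symmetry. apply (cl_eq_shift _ _ t). auto.
    + exfalso. apply B1. apply (cl_eq_shift _ _ t). auto.
  - apply cl_ex in A1 as [t Ht].
    assert (Hk : k = f y + t * nz) by (rewrite <- Hf, <- Ht; auto).
    replace (g k - y + x) with (x + t * nz) by lia. rewrite Hf.
    destruct (refl_spec (f x) (f y) k Hfxy) as [[B1 B2]|[[B1 B2]|[B1 [B3 B2]]]]; rewrite B2.
    + exfalso. apply Hfxy. rewrite <- B1. apply (cl_eq_shift _ _ t). auto.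
    + lia.
    + exfalso. apply B3. apply (cl_eq_shift _ _ t). auto.
  - rewrite H1.
    destruct (refl_spec (f x) (f y) k Hfxy) as [[B1 B2]|[[B1 B2]|[B1 [B3 B2]]]]; rewrite B2; auto.
    + exfalso. apply cl_ex in B1 as [t Ht]. apply A1. apply (cl_eq_shift _ _ t).
      rewrite Ht, <- Hf. apply H2.
    + exfalso. apply cl_ex in B1 as [t Ht]. apply A3. apply (cl_eq_shift _ _ t).
      rewrite Ht, <- Hf. apply H2.
Qed.


Lemma cl_sub0 x y : cl (x - y) = 0 <-> cl x = cl y.
Proof.
  split; intros H.
  - pose proof (Z.div_mod (x - y) nz nz_neq0). fold (cl (x - y)) in H0.
    apply (cl_eq_shift _ _ ((x - y) / nz)). lia.
  - apply cl_ex in H as [t Ht]. rewrite (cl_eq_shift _ 0 t) by lia. apply cl_small.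
    pose proof nz_ge2; lia.
Qed.

Lemma cl_pred y : cl y <> 0 -> cl (y - 1) = cl y - 1.
Proof.
  intros H. pose proof (Z.div_mod y nz nz_neq0). fold (cl y) in H0.
  pose proof (cl_range y).
  rewrite (cl_eq_shift _ (cl y - 1) (y / nz)) by lia. apply cl_small. lia.
Qed.

Lemma cl_m1 : cl (-1) = nz - 1.
Proof. rewrite (cl_eq_shift _ (nz - 1) (-1)) by lia. apply cl_small. pose proof nz_ge2; lia. Qed.

Lemma cl_m2 : cl (-2) = nz - 2.
Proof. rewrite (cl_eq_shift _ (nz - 2) (-1)) by lia. apply cl_small. pose proof nz_ge2; lia. Qed.

Lemma cl_1 : cl 1 = 1.
Proof. apply cl_small. pose proof nz_ge2; lia. Qed.

Lemma cl_0 : cl 0 = 0.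
Proof. apply cl_small. pose proof nz_ge2; lia. Qed.

Definition F (j x : Z) : Z :=
  if cl (x - j) =? 0 then x - j else x + (j + cl (x - j - 1)) / (nz - 1).

Lemma sigma_eq j x : sigma n (S j) x = refl n (Z.of_nat (j mod n)) (Z.of_nat (j mod n) + 1) x.
Proof. unfold sigma, simple. replace (S j - 1)%nat with j by lia. reflexivity. Qed.

Lemma cl_jmod j : cl (Z.of_nat (j mod n)) = cl (Z.of_nat j).
Proof.
  apply (cl_eq_shift _ _ (- Z.of_nat (j / n))). pose proof (Nat.div_mod j n).
  assert (n <> 0)%nat by lia. specialize (H H0). unfold nz, NZ. lia.
Qed.

Lemma cl_succ_neq i : cl i <> cl (i + 1).
Proof.
  intros E. apply cl_sub0 in E. replace (i - (i + 1)) with (-1) in E by lia.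
  rewrite cl_m1 in E. pose proof nz_ge2; lia.
Qed.

Lemma F_step j x : F (Z.of_nat j + 1) x = F (Z.of_nat j) (sigma n (S j) x).
Proof.
  rewrite sigma_eq. set (i := Z.of_nat (j mod n)). set (J := Z.of_nat j).
  pose proof (cl_jmod j) as Hi. fold i J in Hi. pose proof nz_ge2.
  destruct (refl_spec i (i + 1) x (cl_succ_neq i)) as [[A1 A2]|[[A1 A2]|[A1 [A3 A2]]]];
    rewrite A2; unfold F.
  - rewrite Hi in A1. apply cl_ex in A1 as [t Ht].
    rewrite (cl_eq_shift (x - (J + 1)) (-1) t) by lia. rewrite cl_m1.
    rewrite (cl_eq_shift (x - i + (i + 1) - J) 1 t) by lia. rewrite cl_1.
    rewrite (cl_eq_shift (x - (J + 1) - 1) (-2) t) by lia. rewrite cl_m2.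
    rewrite (cl_eq_shift (x - i + (i + 1) - J - 1) 0 t) by lia. rewrite cl_0.
    destruct (Z.eqb_spec (nz - 1) 0); [lia|]. destruct (Z.eqb_spec 1 0); [lia|].
    replace (J + 1 + (nz - 2)) with (J + 1 * (nz - 1)) by lia.
    rewrite Z.div_add by lia. rewrite ?Z.add_0_r. lia.
  - apply cl_ex in A1 as [t Ht]. apply cl_ex in Hi as [t' Ht'].
    rewrite (cl_eq_shift (x - (J + 1)) 0 (t + t')) by lia.
    rewrite (cl_eq_shift (x - (i + 1) + i - J) 0 (t + t')) by lia. rewrite cl_0. simpl. lia.
  - assert (B1 : cl (x - J) <> 0).
    { rewrite cl_sub0. rewrite <- Hi. auto. }
    assert (B2 : cl (x - (J + 1)) <> 0).
    { rewrite cl_sub0. intros E; apply A3. rewrite E. apply cl_ex in Hi as [t' Ht'].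
      apply (cl_eq_shift _ _ (- t')). lia. }
    destruct (Z.eqb_spec (cl (x - J)) 0); [tauto|].
    destruct (Z.eqb_spec (cl (x - (J + 1))) 0); [tauto|].
    replace (x - J - 1) with (x - (J + 1)) by lia.
    replace (x - (J + 1) - 1) with (x - (J + 1) - 1) by lia.
    rewrite cl_pred by auto. f_equal. f_equal. lia.
Qed.

Definition Wd (j : nat) := prod (map (sigma n) (seq 1 j)).

Lemma F_0 x : F 0 x = x.
Proof.
  unfold F. rewrite !Z.sub_0_r. destruct (Z.eqb_spec (cl x) 0); auto.
  rewrite cl_pred by auto. pose proof (cl_range x). pose proof nz_ge2.
  rewrite Z.div_small; lia.
Qed.

Lemma Wd_F j x : Wd j x = F (Z.of_nat j) x.
Proof.
  revert x; induction j as [|j IH]; intros x.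
  - simpl. rewrite F_0. reflexivity.
  - unfold Wd. rewrite seq_S, map_app, prod_app. fold (Wd j). simpl (prod [_] _).
    replace (1 + j)%nat with (S j) by lia. rewrite IH. change (prod (map (sigma n) [S j]) x) with (sigma n (S j) x). rewrite <- F_step. f_equal. lia.
Qed.


Lemma F_jj J : F J J = 0.
Proof. unfold F. rewrite Z.sub_diag, cl_0. simpl. lia. Qed.

Lemma F_jS J : F J (J + 1) = J + 1 + J / (nz - 1).
Proof.
  unfold F. replace (J + 1 - J) with 1 by lia. rewrite cl_1. simpl.
  replace (J + 1 - J - 1) with 0 by lia. rewrite cl_0, Z.add_0_r. lia.
Qed.

Lemma F_N x : F (nz * (nz - 1)) x = lambda n x.
Proof.
  unfold F, lambda. fold nz. fold (cl x). pose proof nz_ge2.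
  rewrite (cl_eq_shift (x - nz * (nz - 1)) x (- (nz - 1))) by lia.
  destruct (Z.eqb_spec (cl x) 0) as [E|E]; auto.
  rewrite (cl_eq_shift (x - nz * (nz - 1) - 1) (x - 1) (- (nz - 1))) by lia.
  rewrite cl_pred by auto. pose proof (cl_range x).
  replace (nz * (nz - 1) + (cl x - 1)) with (nz * (nz - 1) + (cl x - 1)) by lia.
  rewrite Z.div_add_l by lia. rewrite (Z.div_small (cl x - 1)) by lia. lia.
Qed.

Lemma sigma_per j : per (sigma n j).
Proof. intros k t. unfold sigma, simple. apply refl_per. Qed.

Lemma sigma_invol j : invol (sigma n (S j)).
Proof. intros k. rewrite !sigma_eq. apply refl_inv. apply cl_succ_neq. Qed.

Lemma Wd_per j : per (Wd j).
Proof. apply prod_per. apply Forall_forall. intros f Hf. apply in_map_iff in Hf as [i [<- _]]. apply sigma_per. Qed.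

(* index of the inversion ((0,y)) *)
Lemma tau_spec y : 1 <= y <= nz * nz - 1 -> cl y <> 0 ->
  let J := y - y / nz - 1 in 0 <= J <= nz * (nz - 1) - 1 /\ J + 1 + J / (nz - 1) = y.
Proof.
  intros H1 H2 J. pose proof nz_ge2. pose proof (Z.div_mod y nz nz_neq0). fold (cl y) in H0.
  pose proof (cl_range y). set (q := y / nz) in *.
  assert (0 <= q <= nz - 1).
  { split. apply Z.div_pos; lia. unfold q. apply Z.lt_succ_r. apply Z.div_lt_upper_bound; lia. }
  assert (J = q * (nz - 1) + (cl y - 1)) by (unfold J; lia).
  assert (J / (nz - 1) = q).
  { rewrite H5. rewrite Z.div_add_l by lia. rewrite Z.div_small by lia. lia. }
  split; [|nia]. split; [nia|]. nia.
Qed.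

Lemma Zj_mono j1 j2 : 0 <= j1 <= j2 -> j1 + 1 + j1 / (nz - 1) <= j2 + 1 + j2 / (nz - 1).
Proof. intros. pose proof nz_ge2. pose proof (Z.div_le_mono j1 j2 (nz - 1)). lia. Qed.


Lemma filter_nil_all {A} (p : A -> bool) l : (forall z, In z l -> p z = false) -> filter p l = [].
Proof.
  induction l as [|x l IH]; intros H; simpl; auto. rewrite H by (left; auto). apply IH.
  intros; apply H; right; auto.
Qed.

Lemma filter_split (p : nat -> bool) s len x y : (s <= x < y)%nat -> (y < s + len)%nat ->
  p x = true -> p y = true -> (forall z, (x < z < y)%nat -> p z = false) ->
  exists L1 L2, filter p (seq s len) = L1 ++ x :: y :: L2 /\
    ((exists z, (y < z < s + len)%nat /\ p z = true) -> L2 <> []).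
Proof.
  intros H1 H2 Px Py Hb.
  replace len with ((x - s) + (1 + ((y - x - 1) + (1 + (s + len - y - 1)))))%nat by lia.
  rewrite !seq_app, !filter_app. simpl.
  replace (s + (x - s))%nat with x by lia. simpl. rewrite Px.
  replace (x + 1 + (y - x - 1))%nat with y by lia. rewrite Py.
  rewrite (filter_nil_all p (seq (x + 1) (y - x - 1))).
  2:{ intros z Hz. apply in_seq in Hz. apply Hb. lia. }
  exists (filter p (seq s (x - s))), (filter p (seq (y + 1) (s + len - y - 1))).
  split. reflexivity.
  intros [z [Hz Pz]] E. assert (In z (filter p (seq (y + 1) (s + len - y - 1)))).
  { apply filter_In. split; auto. apply in_seq. lia. }
  rewrite E in H. inversion H.
Qed.

Lemma ss_nth (L : list Z) i j : StronglySorted Z.lt L -> (i < j < length L)%nat ->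
  nth i L 0 < nth j L 0.
Proof.
  revert i j; induction L as [|x L IH]; intros i j H Hij; simpl in *; [lia|].
  inversion H; subst. destruct i, j; try lia.
  - rewrite Forall_forall in H3. apply H3. apply nth_In. lia.
  - apply IH; auto. lia.
Qed.

Lemma sorted_ss (L : list Z) : Sorted Z.lt L -> StronglySorted Z.lt L.
Proof. apply Sorted_StronglySorted. intros x y z; lia. Qed.

Lemma rot_nth (s : list Z) k J i : (1 <= J <= length s)%nat ->
  let R := firstn (length s - J) (skipn (J - 1) s) ++ [k] ++ firstn (J - 1) s in
  length R = length s /\
  ((i < length s - J)%nat -> nth i R 0%Z = nth (J - 1 + i) s 0%Z) /\
  (i = (length s - J)%nat -> nth i R 0%Z = k) /\
  ((length s - J < i < length s)%nat -> nth i R 0%Z = nth (i - (length s - J) - 1) s 0%Z).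
Proof.
  intros HJ R.
  assert (L1 : length (firstn (length s - J) (skipn (J - 1) s)) = (length s - J)%nat).
  { rewrite length_firstn, length_skipn. lia. }
  assert (L2 : length (firstn (J - 1) s) = (J - 1)%nat) by (rewrite length_firstn; lia).
  split; [unfold R; rewrite !length_app; simpl; lia|].
  split; [|split].
  - intros Hi. unfold R. rewrite app_nth1 by lia. rewrite nth_firstn.
    rewrite (proj2 (Nat.ltb_lt _ _)) by lia. rewrite nth_skipn. auto.
  - intros ->. unfold R. rewrite app_nth2 by lia. rewrite L1, Nat.sub_diag. reflexivity.
  - intros Hi. unfold R. rewrite app_nth2 by lia. rewrite L1.
    replace (i - (length s - J))%nat with (S (i - (length s - J) - 1)) by lia. simpl.
    rewrite nth_firstn. rewrite (proj2 (Nat.ltb_lt _ _)) by lia. rewrite Nat.sub_0_r. auto.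
Qed.

Lemma cyc_pair k A al be B : cyc_cond k (A ++ al :: be :: B) -> B <> [] ->
  (al < k -> be < k /\ al < be) /\ (k < al -> (k < be /\ al < be) \/ be < k).
Proof.
  intros [J [HJ Hs]] HB. set (s := A ++ al :: be :: B) in *.
  assert (Ls : length s = (length A + 2 + length B)%nat) by (unfold s; rewrite length_app; simpl; lia).
  assert (LB : (1 <= length B)%nat) by (destruct B; simpl; [congruence|lia]).
  set (p := length A).
  assert (Na : nth p s 0 = al) by (unfold s, p; rewrite app_nth2 by lia; rewrite Nat.sub_diag; auto).
  assert (Nb : nth (S p) s 0 = be) by (unfold s, p; rewrite app_nth2 by lia;
    replace (S (length A) - length A)%nat with 1%nat by lia; auto).
  apply sorted_ss in Hs.
  pose proof (fun i => rot_nth s k J i HJ) as RN. simpl in RN.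
  set (R := firstn (length s - J) (skipn (J - 1) s) ++ k :: firstn (J - 1) s) in *.
  assert (LR : length R = length s) by apply (RN 0%nat).
  destruct (Nat.le_gt_cases (J - 1) p) as [C1|C1].
  -
    assert (X1 : nth (p - (J - 1)) R 0 = al).
    { rewrite (proj1 (proj2 (RN (p - (J - 1))%nat))) by lia. rewrite <- Na. f_equal. lia. }
    assert (X2 : nth (S p - (J - 1)) R 0 = be).
    { rewrite (proj1 (proj2 (RN (S p - (J - 1))%nat))) by lia. rewrite <- Nb. f_equal. lia. }
    assert (X3 : nth (length s - J) R 0 = k) by (apply (proj1 (proj2 (proj2 (RN (length s - J)%nat)))); auto).
    pose proof (ss_nth R (p - (J - 1)) (S p - (J - 1)) Hs ltac:(lia)).
    pose proof (ss_nth R (S p - (J - 1)) (length s - J) Hs ltac:(lia)).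
    rewrite X1, X2 in H. rewrite X2, X3 in H0. lia.
  - destruct (Nat.eq_dec (J - 1) (S p)) as [C2|C2].
    + assert (X1 : nth (length s - 1) R 0 = al).
      { rewrite (proj2 (proj2 (proj2 (RN (length s - 1)%nat)))) by lia. rewrite <- Na. f_equal. lia. }
      assert (X2 : nth 0 R 0 = be).
      { rewrite (proj1 (proj2 (RN 0%nat))) by lia. rewrite <- Nb. f_equal. lia. }
      assert (X3 : nth (length s - J) R 0 = k) by (apply (proj1 (proj2 (proj2 (RN (length s - J)%nat)))); auto).
      pose proof (ss_nth R 0 (length s - J) Hs ltac:(lia)).
      pose proof (ss_nth R (length s - J) (length s - 1) Hs ltac:(lia)).
      rewrite X2, X3 in H. rewrite X3, X1 in H0. lia.
    + assert (X1 : nth (p + (length s - J) + 1) R 0 = al).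
      { rewrite (proj2 (proj2 (proj2 (RN (p + (length s - J) + 1)%nat)))) by lia. rewrite <- Na. f_equal. lia. }
      assert (X2 : nth (S p + (length s - J) + 1) R 0 = be).
      { rewrite (proj2 (proj2 (proj2 (RN (S p + (length s - J) + 1)%nat)))) by lia. rewrite <- Nb. f_equal. lia. }
      assert (X3 : nth (length s - J) R 0 = k) by (apply (proj1 (proj2 (proj2 (RN (length s - J)%nat)))); auto).
      pose proof (ss_nth R (length s - J) (p + (length s - J) + 1) Hs ltac:(lia)).
      pose proof (ss_nth R (p + (length s - J) + 1) (S p + (length s - J) + 1) Hs ltac:(lia)).
      rewrite X3, X1 in H. rewrite X1, X2 in H0. lia.
Qed.

Section Main.
Variable r : list (Z -> Z).
Variables a b : nat -> Z.
Hypothesis Hlen : length r = (2 * n - 2)%nat.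
Hypothesis Hprod : feq (prod r) (lambda n).
Hypothesis Hw : tree_witness n r a b.
Hypothesis HsortN : Sorted Z.lt (Nlist n a b (NZ n)).
Hypothesis Hcyc : forall k, 1 <= k < NZ n -> cyc_cond k (Nlist n a b k).

Let m := (2 * n - 2)%nat.

Lemma W1 c : (c < m)%nat ->
  cl (a c) <> cl (b (S c)) /\ a c < b (S c) /\ feq (nth c r (fun k => k)) (refl n (a c) (b (S c))).
Proof.
  intros Hc. destruct Hw as [H1 _]. specialize (H1 (S c)). replace (S c - 1)%nat with c in H1 by lia.
  destruct H1 as [A [B C]]; [unfold m in Hc; lia|]. rewrite congrb_cl in A.
  split; auto. intros E. rewrite E, Z.eqb_refl in A. discriminate.
Qed.

Lemma W2 c : (1 <= c)%nat -> (c < m)%nat -> cl (a c) = cl (b c).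
Proof.
  intros H1 H2. destruct Hw as [_ HH]. specialize (HH c). rewrite congrb_cl in HH.
  apply Z.eqb_eq. apply HH. unfold m in H2; lia.
Qed.

Definition d c := b (S c) - a c.

Fixpoint E (c : nat) : Z := match c with O => a O | S c' => E c' + d c' end.

Definition P c := prod (firstn c r).
Definition Pinv c := prod (rev (firstn c r)).

Lemma P_S c k : (c < m)%nat -> P (S c) k = P c (refl n (a c) (b (S c)) k).
Proof.
  intros Hc. unfold P. rewrite (firstn_S_nth _ _ (fun k => k)) by (unfold m in Hc; lia).
  rewrite prod_app. simpl (prod [_] _). f_equal. apply (W1 c Hc).
Qed.

Lemma Pinv_S c k : (c < m)%nat -> Pinv (S c) k = nth c r (fun k => k) (Pinv c k).
Proof.
  intros Hc. unfold Pinv. rewrite (firstn_S_nth _ _ (fun k => k)) by (unfold m in Hc; lia).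
  rewrite rev_app_distr. reflexivity.
Qed.

Lemma d_pos c : (c < m)%nat -> 1 <= d c.
Proof. intros Hc. destruct (W1 c Hc) as [_ [H _]]. unfold d. lia. Qed.

Lemma E_cl_a c : (c < m)%nat -> cl (E c) = cl (a c).
Proof.
  induction c as [|c IH]; intros Hc; simpl; auto.
  rewrite W2 by lia. unfold d. rewrite cl_add, IH by lia. rewrite <- cl_add. f_equal. lia.
Qed.

Lemma E_cl_b c : (c < m)%nat -> cl (E (S c)) = cl (b (S c)).
Proof.
  intros Hc. simpl. unfold d. rewrite cl_add, E_cl_a by lia. rewrite <- cl_add. f_equal. lia.
Qed.

Lemma E_ge c : (c <= m)%nat -> E c >= a 0 + Z.of_nat c.
Proof.
  induction c as [|c IH]; intros Hc; simpl; [lia|]. pose proof (d_pos c). lia.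
Qed.

Lemma r_per : Forall per r.
Proof.
  apply Forall_forall. intros f Hf. apply (In_nth _ _ (fun k => k)) in Hf as [c [Hc <-]].
  rewrite Hlen in Hc. destruct (W1 c Hc) as [_ [_ H]].
  intros k t. rewrite !H. apply refl_per.
Qed.

Lemma r_invol : Forall invol r.
Proof.
  apply Forall_forall. intros f Hf. apply (In_nth _ _ (fun k => k)) in Hf as [c [Hc <-]].
  rewrite Hlen in Hc. destruct (W1 c Hc) as [H0 [_ H]].
  intros k. rewrite !H. apply refl_inv. auto.
Qed.

Lemma in_firstn {A} (x : A) c l : In x (firstn c l) -> In x l.
Proof. intros H. rewrite <- (firstn_skipn c l). apply in_or_app. auto. Qed.

Lemma P_per c : per (P c).
Proof.
  apply prod_per. apply Forall_forall. intros f Hf. apply in_firstn in Hf.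
  pose proof r_per. rewrite Forall_forall in H. auto.
Qed.

Lemma Pinv_per c : per (Pinv c).
Proof.
  apply prod_per. apply Forall_forall. intros f Hf. apply in_rev in Hf. apply in_firstn in Hf.
  pose proof r_per. rewrite Forall_forall in H. auto.
Qed.

Lemma P_inv c k : Pinv c (P c k) = k /\ P c (Pinv c k) = k.
Proof.
  apply prod_rev_inv. apply Forall_forall. intros f Hf. apply in_firstn in Hf.
  pose proof r_invol. rewrite Forall_forall in H. auto.
Qed.

Lemma P_E c : (c <= m)%nat -> P c (E c) = a 0.
Proof.
  induction c as [|c IH]; intros Hc; [reflexivity|].
  rewrite P_S by lia. rewrite <- IH by lia. f_equal.
  destruct (W1 c ltac:(lia)) as [H0 _].
  destruct (refl_spec (a c) (b (S c)) (E (S c)) H0) as [[A1 A2]|[[A1 A2]|[A1 [A3 A2]]]].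
  - exfalso. rewrite E_cl_b in A1 by lia. auto.
  - rewrite A2. simpl. unfold d. lia.
  - exfalso. rewrite E_cl_b in A3 by lia. auto.
Qed.

Definition G c z := P c z - z.

Lemma G_cl c z z' : cl z = cl z' -> G c z = G c z'.
Proof.
  intros H. apply cl_ex in H as [t ->]. unfold G. rewrite P_per. lia.
Qed.

Lemma G_step1 c z : (c < m)%nat -> cl z = cl (a c) -> G (S c) z = G c (b (S c)) + d c.
Proof.
  intros Hc H. destruct (W1 c Hc) as [H0 _]. unfold G. rewrite P_S by auto.
  destruct (refl_spec (a c) (b (S c)) z H0) as [[A1 A2]|[[A1 A2]|[A1 [A3 A2]]]]; try (exfalso; congruence).
  rewrite A2. fold (G c (z - a c + b (S c))).
  replace (P c (z - a c + b (S c))) with (G c (z - a c + b (S c)) + (z - a c + b (S c))) by (unfold G; lia).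
  rewrite (G_cl c _ (b (S c))). unfold d, G. lia.
  apply cl_ex in A1 as [t Ht]. apply (cl_eq_shift _ _ t). lia.
Qed.

Lemma G_step3 c z : (c < m)%nat -> cl z <> cl (a c) -> cl z <> cl (b (S c)) -> G (S c) z = G c z.
Proof.
  intros Hc H1 H2. destruct (W1 c Hc) as [H0 _]. unfold G. rewrite P_S by auto.
  destruct (refl_spec (a c) (b (S c)) z H0) as [[A1 A2]|[[A1 A2]|[A1 [A3 A2]]]]; try (exfalso; congruence).
  rewrite A2. auto.
Qed.

Lemma G_cur c : (c <= m)%nat -> G c (E c) = a 0 - E c.
Proof. intros Hc. unfold G. rewrite P_E; auto. Qed.

Lemma G_nonneg c z : (c <= m)%nat -> cl z <> cl (E c) -> 0 <= G c z.
Proof.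
  revert z; induction c as [|c IH]; intros z Hc Hz.
  - unfold G, P. simpl. lia.
  - destruct (cl_eq_dec z (a c)) as [E1|E1].
    + rewrite G_step1 by (auto; lia). pose proof (d_pos c ltac:(lia)).
      assert (0 <= G c (b (S c))). { apply IH; [lia|]. rewrite E_cl_a by lia.
        destruct (W1 c ltac:(lia)); auto. }
      lia.
    + rewrite E_cl_b in Hz by lia. rewrite G_step3 by (auto; lia). apply IH; [lia|].
      rewrite E_cl_a by lia. auto.
Qed.

Lemma Pm_lambda k : P m k = lambda n k.
Proof. unfold P. rewrite firstn_all2 by lia. apply Hprod. Qed.

Lemma G_final z : G m z = if cl z =? 0 then - nz * (nz - 1) else nz.
Proof.
  unfold G. rewrite Pm_lambda. unfold lambda. fold nz. fold (cl z).
  destruct (cl z =? 0); lia.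
Qed.

Lemma m_ge2 : (2 <= m)%nat.
Proof. unfold m; lia. Qed.

Lemma Em_facts : cl (E m) = 0 /\ E m - a 0 = nz * (nz - 1) /\ cl (a 0) = 0.
Proof.
  pose proof (G_cur m (le_n _)) as H1. pose proof (E_ge m (le_n _)) as H2.
  pose proof m_ge2. rewrite G_final in H1.
  destruct (Z.eqb_spec (cl (E m)) 0) as [E0|E0]; [|pose proof nz_ge2; lia].
  split; auto. split; [lia|].
  rewrite <- E0. apply (cl_eq_shift _ _ (- (nz - 1))). lia.
Qed.

Lemma G_upper_aux k : (k <= m)%nat -> forall z, cl z <> cl (E (m - k)) -> G (m - k) z <= nz.
Proof.
  induction k as [|k IH]; intros Hk z Hz.
  - replace (m - 0)%nat with m in * by lia. rewrite G_final.
    destruct (Z.eqb_spec (cl z) 0); [pose proof nz_ge2; nia|lia].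
  - set (c := (m - S k)%nat) in *. assert (Hc : (c < m)%nat) by lia.
    assert (Hc' : (m - k = S c)%nat) by lia. rewrite Hc' in IH.
    destruct (W1 c Hc) as [H0 _].
    rewrite E_cl_a in Hz by auto.
    destruct (cl_eq_dec z (b (S c))) as [E1|E1].
    + rewrite (G_cl c z (b (S c))) by auto.
      pose proof (G_step1 c (a c) Hc eq_refl).
      assert (G (S c) (a c) <= nz). { apply IH; [lia|]. rewrite E_cl_b by auto. auto. }
      pose proof (d_pos c Hc). lia.
    + rewrite <- G_step3 by auto. apply IH; [lia|]. rewrite E_cl_b by auto. auto.
Qed.

Lemma G_upper c z : (c <= m)%nat -> cl z <> cl (E c) -> G c z <= nz.
Proof.
  intros Hc Hz. replace c with (m - (m - c))%nat in * by lia. apply G_upper_aux; auto. lia.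
Qed.

Definition h c := G c (b (S c)).

Lemma h_bounds c : (c < m)%nat -> 0 <= h c /\ h c <= nz - d c /\ 1 <= d c <= nz - 1.
Proof.
  intros Hc. destruct (W1 c Hc) as [H0 _]. pose proof (d_pos c Hc).
  assert (0 <= h c). { apply G_nonneg; [lia|]. rewrite E_cl_a by auto. auto. }
  assert (h c <= nz - d c).
  { pose proof (G_step1 c (a c) Hc eq_refl).
    assert (G (S c) (a c) <= nz). { apply G_upper; [lia|]. rewrite E_cl_b by auto. auto. }
    unfold h. lia. }
  split; auto. split; auto. split; auto.
  assert (d c <> nz). { intros E1. apply H0. apply (cl_eq_shift _ _ (-1)). unfold d in E1. lia. }
  lia.
Qed.

Definition phi v := if v <=? 0 then 0 else if v <? nz then 1 else 2.
Definition sumL (f : Z -> Z) (l : list Z) := fold_right (fun z acc => f z + acc) 0 l.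
Definition Lz := map Z.of_nat (seq 0 n).
Definition Phi c := sumL (fun z => phi (G c z)) Lz.

Lemma sumL_lin f g p q al be l : (forall z, In z l -> f z = g z + al * p z + be * q z) ->
  sumL f l = sumL g l + al * sumL p l + be * sumL q l.
Proof.
  induction l as [|z l IH]; intros H; simpl; [lia|].
  rewrite H by (left; auto). rewrite IH by (intros; apply H; right; auto). ring.
Qed.

Lemma sumL_ext f g l : (forall z, In z l -> f z = g z) -> sumL f l = sumL g l.
Proof.
  induction l as [|z l IH]; intros H; simpl; auto.
  rewrite H by (left; auto). rewrite IH by (intros; apply H; right; auto). auto.
Qed.

Lemma sumL_const k l : sumL (fun _ => k) l = k * Z.of_nat (length l).
Proof. induction l as [|z l IH]; simpl; lia. Qed.

Lemma sum_ind_gen w s len : sumL (fun z => if z =? w then 1 else 0) (map Z.of_nat (seq s len)) =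
  if andb (Z.of_nat s <=? w) (w <? Z.of_nat (s + len)) then 1 else 0.
Proof.
  revert s; induction len as [|len IH]; intros s; simpl.
  - destruct (Z.of_nat s <=? w) eqn:E1; destruct (w <? Z.of_nat (s + 0)) eqn:E2; simpl; auto.
    apply Z.leb_le in E1. apply Z.ltb_lt in E2. lia.
  - rewrite IH. destruct (Z.eqb_spec (Z.of_nat s) w).
    + subst. rewrite (proj2 (Z.leb_gt (Z.of_nat (S s)) (Z.of_nat s))) by lia. simpl.
      rewrite Z.leb_refl. simpl. rewrite (proj2 (Z.ltb_lt _ _)) by lia. auto.
    + destruct (Z.of_nat (S s) <=? w) eqn:E1; destruct (w <? Z.of_nat (S s + len)) eqn:E2;
      destruct (Z.of_nat s <=? w) eqn:E3; destruct (w <? Z.of_nat (s + S len)) eqn:E4; simpl;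
      rewrite ?Z.leb_le, ?Z.leb_gt, ?Z.ltb_lt, ?Z.ltb_ge in *; lia.
Qed.

Lemma Lz_in z : In z Lz -> 0 <= z < nz.
Proof. unfold Lz. intros H. apply in_map_iff in H as [i [<- Hi]]. apply in_seq in Hi. unfold nz, NZ. lia. Qed.

Lemma sum_ind_cl v : sumL (fun z => if cl z =? cl v then 1 else 0) Lz = 1.
Proof.
  rewrite (sumL_ext _ (fun z => if z =? cl v then 1 else 0)).
  - unfold Lz. rewrite sum_ind_gen. pose proof (cl_range v).
    rewrite (proj2 (Z.leb_le _ _)) by lia. rewrite (proj2 (Z.ltb_lt _ _)) by (unfold nz, NZ in *; lia). auto.
  - intros z Hz. rewrite cl_small by (apply Lz_in; auto). auto.
Qed.

Lemma Lz_len : Z.of_nat (length Lz) = nz.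
Proof. unfold Lz. rewrite length_map, length_seq. auto. Qed.

Lemma Phi_step c : (c < m)%nat -> Phi (S c) = Phi c + phi (h c + d c) - phi (h c).
Proof.
  intros Hc. destruct (W1 c Hc) as [H0 _].
  unfold Phi.
  rewrite (sumL_lin _ (fun z => phi (G c z)) (fun z => if cl z =? cl (a c) then 1 else 0)
           (fun z => if cl z =? cl (b (S c)) then 1 else 0) (phi (h c + d c)) (- phi (h c))).
  - rewrite !sum_ind_cl. lia.
  - intros z _. destruct (Z.eqb_spec (cl z) (cl (a c))) as [E1|E1].
    + destruct (Z.eqb_spec (cl z) (cl (b (S c)))) as [E2|E2]; [congruence|].
      rewrite G_step1 by auto. fold (h c).
      rewrite (G_cl c z (E c)) by (rewrite E_cl_a by auto; auto). rewrite G_cur by lia.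
      pose proof (E_ge c ltac:(lia)). unfold phi at 2. rewrite (proj2 (Z.leb_le _ _)) by lia. lia.
    + destruct (Z.eqb_spec (cl z) (cl (b (S c)))) as [E2|E2].
      * rewrite (G_cl (S c) z (E (S c))) by (rewrite E_cl_b by auto; auto). rewrite G_cur by lia.
        rewrite (G_cl c z (b (S c))) by auto. fold (h c).
        pose proof (E_ge (S c) ltac:(lia)). unfold phi at 1. rewrite (proj2 (Z.leb_le _ _)) by lia. lia.
      * rewrite G_step3 by auto. lia.
Qed.

Lemma Phi_0 : Phi 0 = 0.
Proof.
  unfold Phi. rewrite (sumL_ext _ (fun _ => 0)). rewrite sumL_const. lia.
  intros z _. unfold G, P. simpl. rewrite Z.sub_diag. reflexivity.
Qed.

Lemma Phi_m : Phi m = 2 * nz - 2.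
Proof.
  unfold Phi. rewrite (sumL_lin _ (fun _ => 2) (fun z => if cl z =? cl 0 then 1 else 0) (fun _ => 0) (-2) 0).
  - rewrite sum_ind_cl, sumL_const, Lz_len. lia.
  - intros z _. rewrite G_final. rewrite cl_0. pose proof nz_ge2.
    destruct (Z.eqb_spec (cl z) 0); unfold phi.
    + rewrite (proj2 (Z.leb_le _ _)) by nia. lia.
    + rewrite (proj2 (Z.leb_gt _ _)) by lia. rewrite Z.ltb_irrefl. lia.
Qed.

Lemma phi_delta c : (c < m)%nat -> phi (h c + d c) - phi (h c) <= 1 /\
  (phi (h c + d c) - phi (h c) = 1 -> h c = 0 \/ h c + d c = nz).
Proof.
  intros Hc. destruct (h_bounds c Hc) as [B1 [B2 B3]]. unfold phi.
  destruct (Z.leb_spec (h c + d c) 0); [lia|].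
  destruct (Z.ltb_spec (h c + d c) nz);
  destruct (Z.leb_spec (h c) 0); try destruct (Z.ltb_spec (h c) nz); lia.
Qed.

Lemma Phi_le c : (c <= m)%nat -> Phi c <= Z.of_nat c.
Proof.
  induction c as [|c IH]; intros Hc. rewrite Phi_0; lia.
  rewrite Phi_step by lia. pose proof (phi_delta c ltac:(lia)). specialize (IH ltac:(lia)). lia.
Qed.

Lemma Phi_rest k : (k <= m)%nat -> Phi m <= Phi (m - k) + Z.of_nat k.
Proof.
  induction k as [|k IH]; intros Hk. replace (m - 0)%nat with m by lia. lia.
  specialize (IH ltac:(lia)). replace (m - k)%nat with (S (m - S k)) in IH by lia.
  rewrite Phi_step in IH by lia. pose proof (phi_delta (m - S k) ltac:(lia)). lia.
Qed.

Lemma dicho c : (c < m)%nat -> h c = 0 \/ h c + d c = nz.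
Proof.
  intros Hc. destruct (phi_delta c Hc) as [D1 D2]. apply D2.
  destruct (Z.eq_dec (phi (h c + d c) - phi (h c)) 1) as [E1|E1]; auto. exfalso.
  pose proof (Phi_le c ltac:(lia)). pose proof (Phi_rest (m - S c) ltac:(lia)).
  replace (m - (m - S c))%nat with (S c) in H0 by lia. rewrite Phi_step in H0 by lia.
  rewrite Phi_m in H0. unfold m in *. unfold nz, NZ in *. lia.
Qed.

Lemma modrep_eq v : modrep n v = cl (v - 1) + 1.
Proof. reflexivity. Qed.

Lemma modrep_cl v : cl (modrep n v) = cl v /\ 1 <= modrep n v <= nz.
Proof.
  rewrite modrep_eq. pose proof (cl_range (v - 1)). split; [|lia].
  pose proof (Z.div_mod (v - 1) nz nz_neq0). fold (cl (v - 1)) in H0.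
  symmetry. apply (cl_eq_shift _ _ ((v - 1) / nz)). lia.
Qed.

Lemma cl_eq_range lo x y : cl x = cl y -> lo <= x < lo + nz -> lo <= y < lo + nz -> x = y.
Proof. intros H H1 H2. apply cl_ex in H as [t Ht]. pose proof nz_ge2.
  destruct (Z.lt_trichotomy t 0) as [T|[T|T]]; [nia|subst; lia|nia]. Qed.

Definition ne j i := cl (a i) <> cl j /\ cl (b (S i)) <> cl j.

Lemma G_const j t1 k : (t1 + k <= m)%nat -> (forall i, (t1 <= i < t1 + k)%nat -> ne j i) ->
  G (t1 + k) j = G t1 j.
Proof.
  induction k as [|k IH]; intros Hk H. rewrite Nat.add_0_r; auto.
  replace (t1 + S k)%nat with (S (t1 + k)) by lia.
  destruct (H (t1 + k)%nat ltac:(lia)) as [N1 N2].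
  rewrite G_step3 by (auto; lia). apply IH; [lia|]. intros; apply H; lia.
Qed.

Lemma ne_dec j i : {ne j i} + {~ ne j i}.
Proof.
  unfold ne. destruct (cl_eq_dec (a i) j); [right; tauto|].
  destruct (cl_eq_dec (b (S i)) j); [right; tauto|left; auto].
Qed.

Lemma last_event j t : (forall i, (i < t)%nat -> ne j i) \/
  (exists i, (i < t)%nat /\ ~ ne j i /\ forall i', (i < i' < t)%nat -> ne j i').
Proof.
  induction t as [|t IH]. left; intros; lia.
  destruct (ne_dec j t) as [Y|Y].
  - destruct IH as [IH|[i [Hi [Hn' Hb]]]].
    + left. intros i Hi. destruct (Nat.eq_dec i t); subst; auto. apply IH; lia.
    + right. exists i. split; [lia|]. split; auto. intros i' Hi'.
      destruct (Nat.eq_dec i' t); subst; auto. apply Hb; lia.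
  - right. exists t. split; [lia|]. split; auto. intros; lia.
Qed.

Lemma bm_0 : cl (b m) = 0.
Proof.
  pose proof Em_facts as [H _]. replace m with (S (m - 1)) in H |- * by (pose proof m_ge2; lia).
  rewrite E_cl_b in H by lia. auto.
Qed.

Lemma d_modrep c k : (c < m)%nat -> cl (a c) = cl k -> 1 <= k <= nz ->
  (k + d c <= nz -> modrep n (b (S c)) = k + d c) /\
  (nz < k + d c -> modrep n (b (S c)) = k + d c - nz).
Proof.
  intros Hc H1 H2. destruct (h_bounds c Hc) as [_ [_ D]].
  destruct (modrep_cl (b (S c))) as [M1 M2].
  assert (cl (modrep n (b (S c))) = cl (k + d c)).
  { rewrite M1. unfold d. rewrite (cl_add k), <- H1, <- cl_add. f_equal. lia. }
  split; intros.
  - apply (cl_eq_range 1); auto; lia.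
  - apply (cl_eq_range 1); [|lia|lia]. rewrite H. symmetry. apply (cl_eq_shift _ _ (-1)). lia.
Qed.

Lemma Y_mono c : (S c < m)%nat -> h c < d (S c) + h (S c).
Proof.
  intros Hc.
  destruct (h_bounds c ltac:(lia)) as [B1 [B2 B3]].
  destruct (h_bounds (S c) ltac:(lia)) as [C1 [C2 C3]].
  destruct (dicho c ltac:(lia)) as [D1|D1]; [lia|].
  destruct (dicho (S c) ltac:(lia)) as [D2|D2]; [|lia].
  set (j := b (S c)).
  assert (Hdep : cl (a (S c)) = cl j) by (apply W2; lia).
  assert (Hnot : cl (a c) <> cl j) by (apply W1; lia).
  destruct (last_event j c) as [NE|[i [Hi [Hev Hafter]]]].
  - exfalso. pose proof (G_const j 0 c ltac:(lia)) as G0. simpl in G0.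
    unfold h in D1; fold j in D1; rewrite G0 in D1 by (intros; apply NE; lia). unfold G, P in D1. simpl in D1. lia.
  - assert (Hdi : cl (a i) = cl j).
    { unfold ne in Hev. destruct (cl_eq_dec (a i) j) as [X|X]; auto. exfalso.
      destruct (cl_eq_dec (b (S i)) j) as [Y|Y]; [|tauto].
      destruct (Nat.eq_dec (S i) c) as [Z1|Z1].
      - subst c. apply Hnot. rewrite W2 by lia. auto.
      - destruct (Hafter (S i) ltac:(lia)) as [Z2 _]. apply Z2. rewrite W2 by lia. auto. }
    assert (HGc : h c = h i + d i).
    { unfold h. fold j. replace c with (S i + (c - S i))%nat at 1 by lia.
      rewrite G_const by (try lia; intros; apply Hafter; lia).
      apply G_step1; auto; lia. }
    destruct (h_bounds i ltac:(lia)) as [A1 [A2 A3]].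
    destruct (dicho i ltac:(lia)) as [D3|D3]; [|lia].
    (* compare d i and d (S c) using N-lists *)
    assert (Hbetween : forall z, (S i < z < S (S c))%nat -> cl (a (z - 1)) <> cl j).
    { intros z Hz. destruct (Nat.eq_dec (z - 1) c) as [Z1|Z1].
      - rewrite Z1. auto.
      - apply (Hafter (z - 1)%nat). lia. }
    assert (Hfin : d i < d (S c)).
    2:{ lia. }
    destruct (Z.eq_dec (cl j) 0) as [J0|J0].
    +
      set (p := fun z => congrb n (a (z - 1)) nz).
      assert (Pcl : forall z, p z = true <-> cl (a (z - 1)) = cl j).
      { intros z. unfold p. rewrite congrb_cl. rewrite Z.eqb_eq.
        rewrite J0. rewrite (cl_eq_shift nz 0 1) by lia. rewrite cl_0. tauto. }
      destruct (filter_split p 1 m (S i) (S (S c))) as [L1 [L2 [HF _]]]; try lia.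
      * apply Pcl. replace (S i - 1)%nat with i by lia. auto.
      * apply Pcl. replace (S (S c) - 1)%nat with (S c) by lia. auto.
      * intros z Hz. destruct (p z) eqn:E; auto. apply Pcl in E. exfalso. apply (Hbetween z); auto.
      * assert (NL : Nlist n a b (NZ n) = map (fun i => modrep n (b i)) L1 ++
           modrep n (b (S i)) :: modrep n (b (S (S c))) :: map (fun i => modrep n (b i)) L2).
        { unfold Nlist. change (filter (fun i => congrb n (a (i - 1)) (NZ n)) (seq 1 (2 * n - 2))) with (filter p (seq 1 m)). rewrite HF. rewrite map_app. reflexivity. }
        pose proof (sorted_ss _ HsortN) as SS. rewrite NL in SS.
        pose proof (ss_nth _ (length (map (fun i => modrep n (b i)) L1))
                       (S (length (map (fun i => modrep n (b i)) L1))) SS) as X.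
        rewrite !app_nth2 in X by lia. rewrite Nat.sub_diag in X.
        replace (S (length (map (fun i0 : nat => modrep n (b i0)) L1)) -
                 length (map (fun i0 : nat => modrep n (b i0)) L1))%nat with 1%nat in X by lia.
        simpl in X. rewrite length_app in X. simpl in X. specialize (X ltac:(lia)).
        assert (cl (a i) = cl nz) by (rewrite Hdi, J0, (cl_eq_shift nz 0 1), cl_0; lia).
        assert (cl (a (S c)) = cl nz) by (rewrite Hdep, J0, (cl_eq_shift nz 0 1), cl_0; lia).
        destruct (d_modrep i nz ltac:(lia) H ltac:(lia)) as [_ M1].
        destruct (d_modrep (S c) nz ltac:(lia) H0 ltac:(lia)) as [_ M2].
        rewrite M1, M2 in X by lia. lia.
    + set (k := cl j).
      assert (Hk : 1 <= k < nz) by (pose proof (cl_range j); unfold k; lia).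
      assert (Hkk : cl k = cl j) by (unfold k; apply cl_small; lia).
      set (p := fun z => congrb n (a (z - 1)) k).
      assert (Pcl : forall z, p z = true <-> cl (a (z - 1)) = cl j).
      { intros z. unfold p. rewrite congrb_cl, Z.eqb_eq, Hkk. tauto. }
      assert (Later : exists z, (S (S c) < z < 1 + m)%nat /\ p z = true).
      { destruct (existsb p (seq (S (S (S c))) (m - S (S c)))) eqn:EX.
        - apply existsb_exists in EX as [z [Hz Pz]]. apply in_seq in Hz. exists z. split; auto. lia.
        - exfalso. assert (NEa : forall z, (S (S c) < z <= m)%nat -> cl (a (z - 1)) <> cl j).
          { intros z Hz E1. apply Pcl in E1. assert (existsb p (seq (S (S (S c))) (m - S (S c))) = true).
            { apply existsb_exists. exists z. split; auto. apply in_seq. lia. }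
            congruence. }
          assert (Gm : G (S (S c) + (m - S (S c))) j = G (S (S c)) j).
          { apply G_const; [lia|]. intros i' Hi'. split.
            - replace i' with (S i' - 1)%nat by lia. apply NEa. lia.
            - destruct (Nat.eq_dec (S i') m) as [Z1|Z1].
              + rewrite Z1, bm_0. auto.
              + rewrite <- W2 by lia. replace (S i') with (S (S i') - 1)%nat by lia. apply NEa. lia. }
          replace (S (S c) + (m - S (S c)))%nat with m in Gm by lia.
          rewrite G_final in Gm. destruct (Z.eqb_spec (cl j) 0); [tauto|].
          rewrite G_step1 in Gm by (auto; lia). fold (h (S c)) in Gm. lia. }
      destruct (filter_split p 1 m (S i) (S (S c))) as [L1 [L2 [HF HL2]]]; try lia.
      * apply Pcl. replace (S i - 1)%nat with i by lia. auto.
      * apply Pcl. replace (S (S c) - 1)%nat with (S c) by lia. auto.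
      * intros z Hz. destruct (p z) eqn:E; auto. apply Pcl in E. exfalso. apply (Hbetween z); auto.
      * specialize (HL2 Later).
        assert (NL : Nlist n a b k = map (fun i => modrep n (b i)) L1 ++
           modrep n (b (S i)) :: modrep n (b (S (S c))) :: map (fun i => modrep n (b i)) L2).
        { unfold Nlist. change (filter (fun i => congrb n (a (i - 1)) k) (seq 1 (2 * n - 2))) with (filter p (seq 1 m)). rewrite HF. rewrite map_app. reflexivity. }
        pose proof (Hcyc k Hk) as HC. rewrite NL in HC.
        apply cyc_pair in HC; [|destruct L2; simpl; congruence].
        assert (cl (a i) = cl k) by (rewrite Hdi, Hkk; auto).
        assert (cl (a (S c)) = cl k) by (rewrite Hdep, Hkk; auto).
        destruct (d_modrep i k ltac:(lia) H ltac:(lia)) as [M1 M2].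
        destruct (d_modrep (S c) k ltac:(lia) H0 ltac:(lia)) as [M3 M4].
        destruct HC as [HC1 HC2].
        destruct (Z.le_gt_cases (k + d i) nz) as [Q1|Q1];
        destruct (Z.le_gt_cases (k + d (S c)) nz) as [Q2|Q2].
        -- rewrite M1, M3 in * by lia. lia.
        -- rewrite M1, M4 in * by lia. lia.
        -- rewrite M2, M3 in * by lia. lia.
        -- rewrite M2, M4 in * by lia. lia.
Qed.

Definition Yp c := E (S c) - a 0 + h c.

Lemma Yp_P c : (c < m)%nat -> Yp c = P c (E (S c)) - a 0.
Proof.
  intros Hc. unfold Yp, h.
  rewrite (G_cl c (b (S c)) (E (S c))) by (rewrite E_cl_b; auto). unfold G. lia.
Qed.

Lemma Yp_mono c : (S c < m)%nat -> Yp c < Yp (S c).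
Proof. intros Hc. unfold Yp. simpl (E (S (S c))). pose proof (Y_mono c Hc). simpl in *. lia. Qed.

Lemma Yp_0 : 1 <= Yp 0.
Proof.
  unfold Yp, h, G, P. simpl. pose proof (d_pos 0 ltac:(pose proof m_ge2; lia)). lia.
Qed.

Lemma Yp_last : Yp (m - 1) <= nz * nz - 1.
Proof.
  pose proof m_ge2. unfold Yp. replace (S (m - 1)) with m by lia.
  destruct Em_facts as [_ [H1 _]]. destruct (h_bounds (m - 1) ltac:(lia)) as [_ [H2 H3]]. nia.
Qed.

Lemma Yp_range c : (c < m)%nat -> 1 <= Yp c <= nz * nz - 1.
Proof.
  intros Hc. split.
  - induction c as [|c IH]. apply Yp_0. pose proof (Yp_mono c Hc). specialize (IH ltac:(lia)). lia.
  - pose proof Yp_last. replace c with (m - 1 - (m - 1 - c))%nat by lia.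
    induction (m - 1 - c)%nat as [|k IH]. replace (m - 1 - 0)%nat with (m - 1)%nat by lia. auto.
    destruct (Nat.le_gt_cases (m - 1) k).
    + replace (m - 1 - S k)%nat with (m - 1 - k)%nat by lia. auto.
    + pose proof (Yp_mono (m - 1 - S k) ltac:(lia)).
      replace (S (m - 1 - S k)) with (m - 1 - k)%nat in H1 by lia. lia.
Qed.

Lemma Yp_cl c : (c < m)%nat -> cl (Yp c) <> 0.
Proof.
  intros Hc E1. rewrite Yp_P in E1 by auto.
  apply cl_sub0 in E1. rewrite <- (P_E c) in E1 by lia.
  apply cl_ex in E1 as [t Ht]. rewrite <- P_per in Ht.
  apply (f_equal (Pinv c)) in Ht. rewrite !(proj1 (P_inv c _)) in Ht.
  destruct (W1 c Hc) as [H0 _]. apply H0. rewrite <- E_cl_a, <- E_cl_b by auto.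
  symmetry. apply (cl_eq_shift _ _ t). auto.
Qed.

Definition Jc c := Yp c - Yp c / nz - 1.
Definition tau c := S (Z.to_nat (Jc c)).

Lemma Jc_spec c : (c < m)%nat -> 0 <= Jc c <= nz * (nz - 1) - 1 /\ Jc c + 1 + Jc c / (nz - 1) = Yp c.
Proof. intros Hc. apply tau_spec. apply Yp_range; auto. apply Yp_cl; auto. Qed.

Let N := (n * (n - 1))%nat.

Lemma N_Z : Z.of_nat N = nz * (nz - 1).
Proof. unfold N, nz, NZ. rewrite Nat2Z.inj_mul, Nat2Z.inj_sub by lia. simpl. lia. Qed.

Lemma tau_range c : (c < m)%nat -> (1 <= tau c <= N)%nat.
Proof. intros Hc. destruct (Jc_spec c Hc) as [H1 _]. pose proof N_Z. unfold tau. lia. Qed.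

Lemma tau_lt c : (S c < m)%nat -> (tau c < tau (S c))%nat.
Proof.
  intros Hc. destruct (Jc_spec c ltac:(lia)) as [A1 A2]. destruct (Jc_spec (S c) Hc) as [B1 B2].
  pose proof (Yp_mono c Hc). unfold tau.
  destruct (Z.lt_ge_cases (Jc c) (Jc (S c))) as [C|C]; [lia|].
  pose proof (Zj_mono (Jc (S c)) (Jc c) ltac:(lia)). lia.
Qed.

Definition tX c := match c with O => O | S c' => if (c' <? m)%nat then tau c' else S N end.

Lemma tX_lt c : (c <= m)%nat -> (tX c < tX (S c))%nat.
Proof.
  intros Hc. destruct c as [|c]; simpl.
  - rewrite (proj2 (Nat.ltb_lt 0 m)) by (pose proof m_ge2; lia). pose proof (tau_range 0 ltac:(pose proof m_ge2; lia)). lia.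
  - rewrite (proj2 (Nat.ltb_lt c m)) by lia.
    destruct (Nat.ltb_spec (S c) m).
    + apply tau_lt; auto.
    + pose proof (tau_range c ltac:(lia)). lia.
Qed.

Lemma tX_mono c1 c2 : (c1 < c2 <= S m)%nat -> (tX c1 < tX c2)%nat.
Proof.
  intros [H1 H2]. induction c2 as [|c2 IH]; [lia|].
  destruct (Nat.eq_dec c1 c2) as [->|Hne]. apply tX_lt; lia.
  pose proof (tX_lt c2 ltac:(lia)). specialize (IH ltac:(lia) ltac:(lia)). lia.
Qed.

Lemma tX_exists j : (j <= N)%nat -> exists c, (c <= m)%nat /\ (tX c <= j < tX (S c))%nat.
Proof.
  induction j as [|j IH]; intros Hj.
  - exists 0%nat. split; [lia|]. pose proof (tX_lt 0 ltac:(lia)). simpl tX at 1. lia.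
  - destruct (IH ltac:(lia)) as [c [Hc [H1 H2]]].
    destruct (Nat.eq_dec (S j) (tX (S c))) as [E1|E1].
    + destruct (Nat.eq_dec c m) as [->|Hcm].
      * exfalso. simpl in E1. rewrite Nat.ltb_irrefl in E1. lia.
      * exists (S c). split; [lia|]. pose proof (tX_lt (S c) ltac:(lia)). lia.
    + exists c. split; auto. lia.
Qed.

Definition T := map tau (seq 0 m).
Definition u := map (fun j => existsb (Nat.eqb j) T) (seq 1 N).

Lemma inT j : existsb (Nat.eqb j) T = true <-> exists c, (c < m)%nat /\ tau c = j.
Proof.
  unfold T. rewrite existsb_exists. split.
  - intros [x [Hx Ex]]. apply in_map_iff in Hx as [c [<- Hc]]. apply in_seq in Hc.
    apply Nat.eqb_eq in Ex. exists c. split; auto. lia.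
  - intros [c [Hc <-]]. exists (tau c). split. apply in_map. apply in_seq. lia. apply Nat.eqb_refl.
Qed.

Lemma u_len : length u = N.
Proof. unfold u. rewrite length_map, length_seq. auto. Qed.

Lemma nth_map_seq {A} (f : nat -> A) j s len d : (j < len)%nat -> nth j (map f (seq s len)) d = f (s + j)%nat.
Proof.
  revert j s; induction len as [|len IH]; intros j s Hj; [lia|]. simpl.
  destruct j; [f_equal; lia|]. rewrite IH by lia. f_equal. lia.
Qed.

Lemma u_nth j : (j < N)%nat -> nth j u false = existsb (Nat.eqb (S j)) T.
Proof. intros Hj. unfold u. rewrite nth_map_seq by auto. reflexivity. Qed.

Lemma letters_nth j : (j < N)%nat -> nth j (letters n u) (fun k => k) = letter n u (S j).
Proof.
  intros Hj. unfold letters. fold N. rewrite nth_map_seq by auto. reflexivity.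
Qed.

Lemma letters_len : length (letters n u) = N.
Proof. unfold letters. rewrite length_map, length_seq. auto. Qed.

Lemma uprefix_S j k : (j < N)%nat -> uprefix n u (S j) k = uprefix n u j (letter n u (S j) k).
Proof.
  intros Hj. unfold uprefix. rewrite (firstn_S_nth _ _ (fun k => k)) by (rewrite letters_len; auto).
  rewrite prod_app, letters_nth by auto. reflexivity.
Qed.

Lemma letters_invol_per : Forall (fun f => invol f /\ per f) (letters n u).
Proof.
  apply Forall_forall. intros f Hf. unfold letters in Hf. apply in_map_iff in Hf as [x [<- Hx]].
  apply in_seq in Hx. unfold letter. destruct (nth (x - 1) u false).
  - split; [intros k; auto|intros k t; auto].
  - replace x with (S (x - 1)) by lia. split. apply sigma_invol. apply sigma_per.
Qed.

Lemma uprefix_inv_spec j k : uprefix n u j (uprefix_inv n u j k) = k /\ uprefix_inv n u j (uprefix n u j k) = k.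
Proof.
  unfold uprefix, uprefix_inv. pose proof (prod_rev_inv (firstn j (letters n u))) as H.
  destruct H with (k := k) as [H1 H2].
  - apply Forall_forall. intros f Hf. apply in_firstn in Hf. pose proof letters_invol_per.
    rewrite Forall_forall in H0. apply H0; auto.
  - split; auto.
Qed.

Lemma uprefix_per j : per (uprefix n u j).
Proof.
  apply prod_per. apply Forall_forall. intros f Hf. apply in_firstn in Hf. pose proof letters_invol_per.
  rewrite Forall_forall in H. apply H; auto.
Qed.

Lemma KEY c j : (c < m)%nat -> j = Z.to_nat (Jc c) ->
  (forall k, uprefix n u j k = Pinv c (Wd j k)) ->
  forall z, uprefix n u j (sigma n (S j) (uprefix_inv n u j z)) = nth c r (fun k => k) z.
Proof.
  intros Hc Hj HU z. rewrite sigma_eq.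
  set (i := Z.of_nat (j mod n)).
  rewrite (conj_refl (uprefix n u j) (uprefix_inv n u j) i (i + 1)).
  2: apply uprefix_per.
  2: intros; apply uprefix_inv_spec.
  2: intros; apply uprefix_inv_spec.
  2: apply cl_succ_neq.
  rewrite !HU. destruct (Jc_spec c Hc) as [J1 J2].
  assert (Ej : Z.of_nat j = Jc c) by lia.
  pose proof (cl_jmod j) as Hi. fold i in Hi. apply cl_ex in Hi as [t Ht].
  rewrite Ht. replace (Z.of_nat j + t * nz + 1) with ((Z.of_nat j + 1) + t * nz) by lia.
  rewrite !Wd_per, !Wd_F, F_jj, F_jS. rewrite Ej, J2.
  destruct Em_facts as [_ [_ A0]]. rewrite <- cl_0 in A0. apply cl_ex in A0 as [t0 Ht0].
  rewrite Yp_P by auto.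
  replace (0 + t * nz) with (P c (E c) + (t - t0) * nz) by (rewrite P_E by lia; lia).
  replace (P c (E (S c)) - a 0 + t * nz) with (P c (E (S c)) + (t - t0) * nz) by lia.
  rewrite !Pinv_per, !(proj1 (P_inv c _)).
  destruct (W1 c Hc) as [H0 [_ Hr]]. rewrite Hr.
  symmetry. apply refl_congr.
  - rewrite <- E_cl_a by auto. symmetry. apply (cl_eq_shift _ _ (t - t0)). lia.
  - simpl. unfold d. lia.
Qed.

Lemma Wd_S j k : Wd (S j) k = Wd j (sigma n (S j) k).
Proof. unfold Wd. rewrite seq_S, map_app, prod_app. replace (1 + j)%nat with (S j) by lia. reflexivity. Qed.

Lemma tX_pos c : (1 <= c <= S m)%nat -> (1 <= tX c)%nat.
Proof. intros H. pose proof (tX_mono 0 c ltac:(lia)). simpl in H0. lia. Qed.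

Lemma INV j : (j <= N)%nat -> forall c, (c <= m)%nat -> (tX c <= j < tX (S c))%nat ->
  forall k, uprefix n u j k = Pinv c (Wd j k).
Proof.
  induction j as [|j IH]; intros Hj c Hc [H1 H2] k.
  - destruct c as [|c]; [|pose proof (tX_pos (S c) ltac:(lia)); lia]. reflexivity.
  - rewrite uprefix_S by lia. unfold letter. replace (S j - 1)%nat with j by lia.
    rewrite u_nth by lia.
    destruct (Nat.eq_dec (tX c) (S j)) as [E1|E1].
    + destruct c as [|c0]; [simpl in E1; lia|].
      assert (Hc0 : (c0 < m)%nat) by lia.
      simpl in E1. rewrite (proj2 (Nat.ltb_lt _ _) Hc0) in E1.
      rewrite (proj2 (inT (S j))) by (exists c0; auto).
      assert (IHj : forall k, uprefix n u j k = Pinv c0 (Wd j k)).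
      { apply IH; [lia|lia|]. pose proof (tX_lt c0 ltac:(lia)). simpl tX at 2.
        rewrite (proj2 (Nat.ltb_lt _ _) Hc0). lia. }
      rewrite Pinv_S by auto. rewrite Wd_S, <- IHj.
      assert (Jj : j = Z.to_nat (Jc c0)) by (unfold tau in E1; lia).
      rewrite <- (KEY c0 j Hc0 Jj IHj). rewrite (proj2 (uprefix_inv_spec _ _)).
      rewrite sigma_invol. auto.
    + assert (NT : existsb (Nat.eqb (S j)) T = false).
      { destruct (existsb (Nat.eqb (S j)) T) eqn:EX; auto. exfalso.
        apply inT in EX as [c' [Hc' Ht]].
        assert (tX (S c') = S j) by (simpl; rewrite (proj2 (Nat.ltb_lt _ _) Hc'); auto).
        destruct (Nat.le_gt_cases (S c') c) as [C|C].
        - destruct (Nat.eq_dec (S c') c) as [Ceq|C']; [subst c; lia|].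
          pose proof (tX_mono (S c') c ltac:(lia)). lia.
        - destruct (Nat.eq_dec (S c') (S c)) as [C'|C']; [rewrite C' in H; lia|].
          pose proof (tX_mono (S c) (S c') ltac:(lia)). lia. }
      rewrite NT. rewrite (IH ltac:(lia) c Hc ltac:(lia)). rewrite Wd_S. auto.
Qed.

Lemma tau_mono c1 c2 : (c1 < c2 < m)%nat -> (tau c1 < tau c2)%nat.
Proof.
  intros [H1 H2]. induction c2 as [|c2 IH]; [lia|].
  destruct (Nat.eq_dec c1 c2) as [->|C]. apply tau_lt; lia.
  pose proof (tau_lt c2 ltac:(lia)). specialize (IH ltac:(lia) ltac:(lia)). lia.
Qed.

Lemma T_sorted : StronglySorted Nat.lt T.
Proof.
  unfold T. assert (forall k c, (c + k <= m)%nat -> StronglySorted Nat.lt (map tau (seq c k))).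
  { induction k as [|k IH]; intros c Hc; simpl; constructor.
    - apply IH; lia.
    - apply Forall_forall. intros x Hx. apply in_map_iff in Hx as [c' [<- Hc']]. apply in_seq in Hc'.
      apply tau_mono. lia. }
  apply H. lia.
Qed.

Lemma filter_mem (Tl : list nat) s len : StronglySorted Nat.lt Tl ->
  (forall t, In t Tl -> (s <= t < s + len)%nat) ->
  filter (fun j => existsb (Nat.eqb j) Tl) (seq s len) = Tl.
Proof.
  revert s Tl; induction len as [|len IH]; intros s Tl HS HT.
  - destruct Tl as [|t Tl]; auto. specialize (HT t (or_introl eq_refl)). lia.
  - simpl. destruct (existsb (Nat.eqb s) Tl) eqn:EX.
    + apply existsb_exists in EX as [x [Hx Ex]]. apply Nat.eqb_eq in Ex. subst x.
      destruct Tl as [|t Tl]; [inversion Hx|]. inversion HS; subst.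
      assert (t = s).
      { destruct Hx as [Hx|Hx]; auto. rewrite Forall_forall in H2. specialize (H2 s Hx).
        specialize (HT t (or_introl eq_refl)). lia. }
      subst t. f_equal. rewrite (filter_ext_in _ (fun j => existsb (Nat.eqb j) Tl)).
      * apply IH; auto. intros t Ht. specialize (HT t (or_intror Ht)). rewrite Forall_forall in H2.
        specialize (H2 t Ht). lia.
      * intros j Hj. apply in_seq in Hj. simpl.
        rewrite (proj2 (Nat.eqb_neq j s)) by lia. auto.
    + apply IH; auto. intros t Ht. specialize (HT t Ht).
      destruct (Nat.eq_dec t s); [|lia]. subst.
      assert (existsb (Nat.eqb s) Tl = true) by (apply existsb_exists; exists s; split; auto; apply Nat.eqb_refl).
      congruence.
Qed.

Lemma filter_u : filter (fun j => existsb (Nat.eqb j) T) (seq 1 N) = T.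
Proof.
  apply filter_mem. apply T_sorted.
  intros t Ht. unfold T in Ht. apply in_map_iff in Ht as [c [<- Hc]]. apply in_seq in Hc.
  pose proof (tau_range c ltac:(lia)). lia.
Qed.

Lemma len_filter_id {A} (f : A -> bool) l : length (filter (fun x => x) (map f l)) = length (filter f l).
Proof. induction l as [|x l IH]; simpl; auto. destruct (f x); simpl; auto. Qed.

Lemma u_count : length (filter (fun x => x) u) = m.
Proof. unfold u. rewrite len_filter_id, filter_u. unfold T. rewrite length_map, length_seq. auto. Qed.

Lemma u_prod k : prod (letters n u) k = k.
Proof.
  assert (prod (letters n u) k = uprefix n u N k).
  { unfold uprefix. rewrite firstn_all2; auto. rewrite letters_len. auto. }
  rewrite H. pose proof m_ge2.
  rewrite (INV N (le_n _) m (le_n _)).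
  - rewrite Wd_F, N_Z, F_N, <- Pm_lambda. apply P_inv.
  - split.
    + replace m with (S (m - 1)) at 1 by lia. simpl tX. rewrite (proj2 (Nat.ltb_lt (m - 1) m)) by lia.
      pose proof (tau_range (m - 1) ltac:(lia)). lia.
    + simpl tX. rewrite Nat.ltb_irrefl. lia.
Qed.

Lemma r_of_eq : r_of n u = map (fun c => tinv n u (tau c)) (seq 0 m).
Proof.
  unfold r_of. fold N. rewrite (filter_ext_in _ (fun j => existsb (Nat.eqb j) T)).
  - rewrite filter_u. unfold T. rewrite map_map. auto.
  - intros j Hj. apply in_seq in Hj. replace j with (S (j - 1)) at 2 by lia. apply u_nth. lia.
Qed.

Lemma r_as_map : r = map (fun c => nth c r (fun k => k)) (seq 0 m).
Proof.
  apply (nth_ext _ _ (fun k => k) (fun k => k)).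
  - rewrite length_map, length_seq. auto.
  - intros c Hc. rewrite nth_map_seq by (unfold m; lia). auto.
Qed.

Lemma main_forall2 : Forall2 feq r (r_of n u).
Proof.
  rewrite r_of_eq. rewrite r_as_map at 1.
  assert (forall l, (forall c, In c l -> (c < m)%nat) ->
    Forall2 feq (map (fun c => nth c r (fun k => k)) l) (map (fun c => tinv n u (tau c)) l)).
  { induction l as [|c l IH]; intros Hl; simpl; constructor.
    - intros k. unfold tinv. set (j := (tau c - 1)%nat).
      assert (Hc : (c < m)%nat) by (apply Hl; left; auto).
      assert (Jj : j = Z.to_nat (Jc c)) by (unfold j, tau; lia).
      replace (tau c) with (S j) by (unfold j, tau; lia).
      assert (HU : forall k, uprefix n u j k = Pinv c (Wd j k)).
      { apply INV. pose proof (tau_range c Hc). unfold j; lia. lia.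
        pose proof (tX_lt c ltac:(lia)). simpl tX at 2 in H. simpl tX at 2.
        rewrite (proj2 (Nat.ltb_lt _ _) Hc) in *. unfold j. split; [|unfold tau; lia].
        unfold tau in *. lia. }
      symmetry. apply KEY; auto.
    - apply IH. intros; apply Hl; right; auto. }
  apply H. intros c Hc. apply in_seq in Hc. lia.
Qed.


End Main.
End Gen.

Theorem proposition5p18 (n : nat) (r : list (Z -> Z)) :
  (2 <= n)%nat -> is_fact n r -> cyclic n r ->
  exists u : list bool, in_Sn n u /\ Forall2 feq r (r_of n u).
Proof.
  intros Hn [Hlen [_ Hprod]] [a [b [Hw [Hs Hc]]]].
  exists (u n r a b). split.
  - split; [|split].
    + apply u_len.
    + apply (u_count n Hn r a b Hlen Hprod Hw Hs Hc).
    + intros k. apply (u_prod n Hn r a b Hlen Hprod Hw Hs Hc).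
  - apply (main_forall2 n Hn r a b Hlen Hprod Hw Hs Hc).
Qed.
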